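(* Let $(F,t)\in U$ with $t\neq0$ and suppose $Y=Y_{F,t}$ is smooth and contains no plane. Then $Y$ has no Eckardt point on $\hat C_1\cup\hat C_2$.
   Context: $U=U_0\times\mathbb{A}^1$, where $U_0$ is the space of cubic forms $F(x_0,\dots,x_3)$ such that the curve cut out by $F$ on the quadric $x_0x_3=x_1x_2$ in $\mathbb{P}^3$ is smooth, avoids $[0,0,0,1]$, and is tangent with multiplicity $2$ to the lines $x_0=x_1=0$ and $x_0=x_2=0$. $Y_{F,t}\subset\mathbb{P}^5$ is $x_4^3-F(x_0,\dots,x_3)+x_5(x_0x_3-x_1x_2)+t\,x_0x_5^2=0$. $C_i=(x_0=x_i=x_5=0)\cap(x_4^3=F)$ and $\hat C_i\subset Y$ is the cone over $C_i$ with vertex $p_0=[0,\dots,0,1]$. An Eckardt point of a smooth cubic fourfold $Y$ is a point $p\in Y$ such that $Y\cap T_pY$ is a cone with vertex $p$, where $T_pY$ is the projective tangent hyperplane at $p$. *)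

(* Defs.v *)
From HB Require Import structures.
From mathcomp Require Import all_boot all_algebra.
From mathcomp Require Import mpoly.
Set Implicit Arguments.
Unset Strict Implicit.
Unset Printing Implicit Defensive.
Import GRing.Theory.
Local Open Scope ring_scope.

(* Points of projective space P^(n-1) are represented by their homogeneous
   coordinate vectors x : 'I_n -> K; a projective point is a nonzero vector
   and every condition below is invariant under rescaling. *)

Section ProjectiveDefs.
Variable K : fieldType.

Definition nonzero_vec n (x : 'I_n -> K) : Prop := exists i, x i != 0.

Definition evec n (i : 'I_n) : 'I_n -> K := fun j => (j == i)%:R.

Definition lincomb n (a : K) (x : 'I_n -> K) (b : K) (y : 'I_n -> K) : 'I_n -> K :=
  fun j => a * x j + b * y j.

Definition smooth_hypersurface n (G : {mpoly K[n]}) : Prop :=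
  forall x : 'I_n -> K, nonzero_vec x -> G.@[x] = 0 ->
    exists i : 'I_n, (G^`M(i)).@[x] != 0.

Definition on_tangent_hyperplane n (G : {mpoly K[n]}) (p x : 'I_n -> K) : Prop :=
  \sum_(i < n) (G^`M(i)).@[p] * x i = 0.

Definition is_cone_with_vertex n (S : ('I_n -> K) -> Prop) (p : 'I_n -> K) : Prop :=
  forall x, S x -> forall a b : K, S (lincomb a p b x).

Definition eckardt_point n (G : {mpoly K[n]}) (p : 'I_n -> K) : Prop :=
  [/\ nonzero_vec p, G.@[p] = 0 &
      is_cone_with_vertex (fun x => G.@[x] = 0 /\ on_tangent_hyperplane G p x) p].

Definition contains_plane n (G : {mpoly K[n]}) : Prop :=
  exists u v w : 'I_n -> K,
    (forall a b c : K, (forall j, a * u j + b * v j + c * w j = 0) ->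
        [/\ a = 0, b = 0 & c = 0]) /\
    (forall a b c : K, G.@[fun j => a * u j + b * v j + c * w j] = 0).

Definition smooth_complete_intersection n (Q F : {mpoly K[n]}) : Prop :=
  forall x : 'I_n -> K, nonzero_vec x -> Q.@[x] = 0 -> F.@[x] = 0 ->
    forall a b : K, (forall i, a * (Q^`M(i)).@[x] + b * (F^`M(i)).@[x] = 0) ->
      a = 0 /\ b = 0.

Definition restrict_to_line n (F : {mpoly K[n]}) (q r : 'I_n -> K) : {poly K} :=
  mmap (fun c : K => c%:P) (fun i => (q i)%:P + (r i)%:P * 'X) F.

(* The curve V(F) ∩ S (S a surface containing the line L spanned by l1, l2)
   is tangent to L with multiplicity 2: there is a point q of L at which the
   intersection multiplicity (= the order of vanishing at q of F restricted
   to L) is exactly 2.  Here r is any second point of L, distinct from q. *)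
Definition tangent_mult2 n (F : {mpoly K[n]}) (l1 l2 : 'I_n -> K) : Prop :=
  exists a b c d : K, a * d - b * c != 0 /\
    let h := restrict_to_line F (lincomb a l1 b l2) (lincomb c l1 d l2) in
    h != 0 /\ mup 0 h = 2%N.

End ProjectiveDefs.

Section CubicFourfold.
Variable K : fieldType.

Definition X6 (k : nat) : {mpoly K[6]} := 'X_(inord k).
Definition X4 (k : nat) : {mpoly K[4]} := 'X_(inord k).
Definition e6 (k : nat) : 'I_6 -> K := @evec K _ (inord k).
Definition e4 (k : nat) : 'I_4 -> K := @evec K _ (inord k).

Definition quadricQ : {mpoly K[4]} := X4 0 * X4 3 - X4 1 * X4 2.

Definition in_U0 (F : {mpoly K[4]}) : Prop :=
  [/\ F \is 3.-homog,
      smooth_complete_intersection quadricQ F,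
      F.@[e4 3] != 0,
      tangent_mult2 F (e4 2) (e4 3)              (* line x0 = x1 = 0 *)
    & tangent_mult2 F (e4 1) (e4 3)].            (* line x0 = x2 = 0 *)

Definition F6 (F : {mpoly K[4]}) : {mpoly K[6]} :=
  F \mPo [tuple X6 0; X6 1; X6 2; X6 3].

Definition Yeq (F : {mpoly K[4]}) (t : K) : {mpoly K[6]} :=
  X6 4 ^+ 3 - F6 F + X6 5 * (X6 0 * X6 3 - X6 1 * X6 2)
  + t%:MP * (X6 0 * X6 5 ^+ 2).

Definition curveC (F : {mpoly K[4]}) (i : nat) (c : 'I_6 -> K) : Prop :=
  [/\ nonzero_vec c, c (inord 0) = 0, c (inord i) = 0, c (inord 5) = 0 &
      c (inord 4) ^+ 3 = F.@[fun j : 'I_4 => c (inord j)]].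

Definition coneC (F : {mpoly K[4]}) (i : nat) (x : 'I_6 -> K) : Prop :=
  nonzero_vec x /\
  exists (a b : K) (c : 'I_6 -> K), curveC F i c /\ x = lincomb a (e6 5) b c.

End CubicFourfold.

(* Main.v *)
Require Import Defs.
From HB Require Import structures.
From mathcomp Require Import all_boot all_algebra.
From mathcomp Require Import mpoly.
From mathcomp Require Import ring zify.
Import GRing.Theory.
Local Open Scope ring_scope.
Section Gen.
Variable K : fieldType.
Hypothesis hK : [pchar K] =i pred0.

Lemma natr_injK (m k : nat) : (m%:R == k%:R :> K) = (m == k).
Proof.
have h0 := (pcharf0P K).1 hK.
wlog le : m k / (m <= k)%N.
  move=> W; case: (leqP m k) => [|/ltnW] H; first exact: W.
  by rewrite eq_sym W // eq_sym.
rewrite -(subnK le) natrD -{1}(add0r (m%:R)) (inj_eq (addIr _)) eq_sym h0.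
by rewrite -{2}(add0n m) eqn_add2r eq_sym.
Qed.

Lemma poly_ext_nat (P Q : {poly K}) :
  (forall k : nat, P.[k.+1%:R] = Q.[k.+1%:R]) -> P = Q.
Proof.
move=> h; apply/eqP; rewrite -subr_eq0; apply/negPn/negP => nz.
have := max_poly_roots (rs := [seq k.+1%:R | k <- iota 0 (size (P - Q))]) nz.
rewrite size_map size_iota ltnn => H; suff: false by []; apply: H.
- by apply/allP => x /mapP [k _ ->]; rewrite /root hornerD hornerN h subrr.
- rewrite map_inj_uniq ?iota_uniq // => a b /eqP; rewrite natr_injK => /eqP [] //.
Qed.

Definition cubP (c0 c1 c2 c3 : K) : {poly K} :=
  c0%:P + c1%:P * 'X + c2%:P * 'X^2 + c3%:P * 'X^3.

Lemma cubP_horner c0 c1 c2 c3 s :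
  (cubP c0 c1 c2 c3).[s] = c0 + c1 * s + c2 * s ^+ 2 + c3 * s ^+ 3.
Proof. by rewrite /cubP !hornerE. Qed.

Lemma cubP_coef1 c0 c1 c2 c3 : (cubP c0 c1 c2 c3)`_1 = c1.
Proof. by rewrite /cubP !coefD !coefCM coefC coefX !coefXn /=; ring. Qed.

Lemma cubic_ext (P : {poly K}) c0 c1 c2 c3 :
  (forall k : nat, P.[k.+1%:R] = c0 + c1 * k.+1%:R + c2 * k.+1%:R ^+ 2 + c3 * k.+1%:R ^+ 3) ->
  P = cubP c0 c1 c2 c3.
Proof. by move=> h; apply: poly_ext_nat => k; rewrite cubP_horner h. Qed.


Section RTL.
Variable n : nat.
Implicit Types (G : {mpoly K[n]}) (q r : 'I_n -> K).

Lemma rtl_horner G q r s :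
  (restrict_to_line G q r).[s] = G.@[fun i => q i + r i * s].
Proof.
rewrite /restrict_to_line /meval /= /mmap horner_sum.
apply: eq_bigr => m _.
rewrite hornerM hornerC /mmap1 horner_prod; congr (_ * _).
by apply: eq_bigr => i _; rewrite horner_exp hornerD hornerC hornerM hornerC hornerX.
Qed.

Lemma meval_homog d G (c : K) v : G \is d.-homog ->
  G.@[fun i => c * v i] = c ^+ d * G.@[v].
Proof.
move/dhomogP => hG.
rewrite /meval /= /mmap big_distrr /= !big_seq; apply: eq_bigr => m /hG hm.
rewrite /mmap1 (eq_bigr (fun i => c ^+ m i * v i ^+ m i)) => [|i _]; last by rewrite exprMn.
rewrite big_split /= prodrXr -hm mulrCA; congr (_ * (_ * _)); congr (_ ^+ _); exact: (esym (mdegE m)).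
Qed.

Lemma size_rtl d G q r : G \is d.-homog ->
  (size (restrict_to_line G q r) <= d.+1)%N.
Proof.
move/dhomogP => hG.
rewrite /restrict_to_line /mmap.
apply: (leq_trans (size_sum _ _ _)).
apply/bigmax_leqP_seq => m mm _.
rewrite mul_polyC; apply: (leq_trans (size_scale_leq _ _)).
rewrite /mmap1; apply: (leq_trans (size_poly_prod_leq _ _)).
have h1 : forall i : 'I_n, (size ((((q i)%:P + (r i)%:P * 'X) ^+ m i)%R) <= (m i).+1)%N.
  move=> i; apply: (leq_trans (size_poly_exp_leq _ _)).
  have : (size (((q i)%:P + (r i)%:P * 'X)%R) <= 2)%N.
    apply: (leq_trans (size_polyD _ _)); rewrite geq_max (leq_trans (size_polyC_leq1 _)) //=.
    apply: (leq_trans (size_mul_leq _ _)); rewrite size_polyX.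
    by have := size_polyC_leq1 (r i); case: (size _) => [|[]].
  case: (size _) => [|[|[]]] //= _; rewrite ?mul0n ?mul1n //.
have h2 : (\sum_(i < n) size ((((q i)%:P + (r i)%:P * 'X) ^+ m i)%R) <= \sum_(i < n) (m i).+1)%N.
  by apply: leq_sum => i _; apply: h1.
have h3 : (\sum_(i < n) (m i).+1 = \sum_(i < n) m i + n)%N.
  rewrite (eq_bigr (fun i => m i + 1)%N) => [|i _]; last by rewrite addn1.
  by rewrite big_split /= sum1_card card_ord.
have hd : d = (\sum_(i<n) m i)%N by rewrite -(hG m mm); exact: mdegE.
rewrite cardT size_enum_ord hd.
move: h2; rewrite h3; set S := (\sum_(i < n) size _)%N; set T := (\sum_(i < n) m i)%N.
move=> h2; rewrite leq_subLR; apply: (leq_trans (n := (T + n).+1)) => //.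
by rewrite -addSn addnC.
Qed.


Lemma rtlD G1 G2 q r :
  restrict_to_line (G1 + G2) q r = restrict_to_line G1 q r + restrict_to_line G2 q r.
Proof. by apply: poly_ext_nat => k; rewrite hornerD !rtl_horner mevalD. Qed.

Lemma rtlM G1 G2 q r :
  restrict_to_line (G1 * G2) q r = restrict_to_line G1 q r * restrict_to_line G2 q r.
Proof. by apply: poly_ext_nat => k; rewrite hornerM !rtl_horner mevalM. Qed.

Lemma rtlC c q r : restrict_to_line (c%:MP : {mpoly K[n]}) q r = c%:P.
Proof. by apply: poly_ext_nat => k; rewrite hornerC !rtl_horner mevalC. Qed.

Lemma rtl0 q r : restrict_to_line (0 : {mpoly K[n]}) q r = 0.
Proof. by apply: poly_ext_nat => k; rewrite horner0 !rtl_horner meval0. Qed.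

Lemma rtlXU i q r : restrict_to_line ('X_i : {mpoly K[n]}) q r = (q i)%:P + (r i)%:P * 'X.
Proof. by apply: poly_ext_nat => k; rewrite rtl_horner mevalXU !hornerE. Qed.

Lemma rtl_coef0 G q r : (restrict_to_line G q r)`_0 = G.@[q].
Proof. by rewrite -horner_coef0 rtl_horner; apply: meval_eq => i; rewrite mulr0 addr0. Qed.

Definition Dlin G (q r : 'I_n -> K) := \sum_(i < n) (G^`M(i)).@[q] * r i.

Lemma taylor G q r : (restrict_to_line G q r)`_1 = Dlin G q r.
Proof.
pose P (G : {mpoly K[n]}) := (restrict_to_line G q r)`_1 = Dlin G q r.
have PD G1 G2 : P G1 -> P G2 -> P (G1 + G2).
  rewrite /P /Dlin rtlD coefD => -> ->; rewrite -big_split /=.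
  by apply: eq_bigr => i _; rewrite mderivD mevalD mulrDl.
have PM G1 G2 : P G1 -> P G2 -> P (G1 * G2).
  rewrite /P /Dlin rtlM coefM !big_ord_recr big_ord0 /= add0r !rtl_coef0 => -> ->.
  rewrite mulr_sumr mulr_suml -big_split /=; apply: eq_bigr => i _.
  by rewrite mderivM mevalD !mevalM; ring.
have PC c : P c%:MP.
  rewrite /P /Dlin rtlC coefC /= big1 // => i _; by rewrite mderivC meval0 mul0r.
have P1 : P 1 by rewrite -mpolyC1; apply: PC.
have PX i : P 'X_i.
  rewrite /P /Dlin rtlXU coefD coefC coefCM coefX /= add0r mulr1.
  rewrite (bigD1 i) //= big1 => [|j nj].
    rewrite mderivX mevalZ mevalX mnm1E eqxx mul1r big1 ?mul1r ?addr0 // => k _.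
    by rewrite mnmBE subnn expr0.
  by rewrite mderivX mevalZ mnm1E eq_sym (negbTE nj) mul0r mul0r.
elim/mpolyind: G => [|c m p _ _ hp].
  by rewrite /P /Dlin rtl0 coef0 big1 // => i _; rewrite mderiv0 meval0 mul0r.
apply: (PD) => //; rewrite -mul_mpolyC; apply: (PM) => //.
rewrite mpolyXE_id; apply: (big_ind P P1 PM) => i _.
elim: (m i) => [|k IH]; first by rewrite expr0.
by rewrite exprS; apply: (PM).
Qed.

Lemma be_nz G q r (hG : G \is 3.-homog) lam mu : lam != 0 ->
  G.@[lincomb lam q mu r] =
  lam ^+ 3 * (restrict_to_line G q r)`_0 + lam ^+ 2 * mu * (restrict_to_line G q r)`_1
  + lam * mu ^+ 2 * (restrict_to_line G q r)`_2 + mu ^+ 3 * (restrict_to_line G q r)`_3.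
Proof.
move=> nz.
have -> : G.@[lincomb lam q mu r] = G.@[fun i => lam * (q i + r i * (mu / lam))].
  by apply: meval_eq => i; rewrite /lincomb; field.
rewrite (@meval_homog 3 G) // -rtl_horner (horner_coef_wide _ (@size_rtl 3 G _ _ hG)).
rewrite !big_ord_recr big_ord0 /=; field.
done.
Qed.

Lemma be G q r (hG : G \is 3.-homog) lam mu :
  G.@[lincomb lam q mu r] =
  lam ^+ 3 * (restrict_to_line G q r)`_0 + lam ^+ 2 * mu * (restrict_to_line G q r)`_1
  + lam * mu ^+ 2 * (restrict_to_line G q r)`_2 + mu ^+ 3 * (restrict_to_line G q r)`_3.
Proof.
have [->|nz] := eqVneq lam 0; last exact: be_nz.
set h := restrict_to_line G q r.
have E : restrict_to_line G (fun i => mu * r i) q =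
   cubP (mu ^+ 3 * h`_3) (mu ^+ 2 * h`_2) (mu * h`_1) h`_0.
  apply: cubic_ext => k.
  have nz : (k.+1%:R : K) != 0 by rewrite ((pcharf0P K).1 hK).
  rewrite rtl_horner.
  have -> : G.@[fun i => mu * r i + q i * k.+1%:R] = G.@[lincomb k.+1%:R q mu r].
    by apply: meval_eq => i; rewrite /lincomb; ring.
  rewrite be_nz // -/h; ring.
have := congr1 (horner^~ 0) E; rewrite rtl_horner cubP_horner.
have -> : G.@[fun i => mu * r i + q i * 0] = G.@[lincomb 0 q mu r].
  by apply: meval_eq => i; rewrite /lincomb; ring.
move=> ->; ring.
Qed.

End RTL.
End Gen.
Section Main.
Variable K : closedFieldType.
Hypothesis hK : [pchar K] =i pred0.
Variables (F : {mpoly K[4]}) (t : K).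

Definition emb (u : 'I_4 -> K) (x4 x5 : K) : 'I_6 -> K :=
  fun i => if (i < 4)%N then u (inord i) else if (i == 4 :> nat) then x4 else x5.

Lemma emb_lt u x4 x5 k : (k < 4)%N -> emb u x4 x5 (inord k) = u (inord k).
Proof. by move=> hk; rewrite /emb inordK ?hk // (ltn_trans hk). Qed.
Lemma emb4 u x4 x5 : emb u x4 x5 (inord 4) = x4.
Proof. by rewrite /emb inordK. Qed.
Lemma emb5 u x4 x5 : emb u x4 x5 (inord 5) = x5.
Proof. by rewrite /emb inordK. Qed.

Lemma emb_eta (v : 'I_6 -> K) :
  v =1 emb (fun i : 'I_4 => v (inord i)) (v (inord 4)) (v (inord 5)).
Proof.
move=> i; rewrite /emb; case: ifP => hi.
  by rewrite inordK // inord_val.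
case: ifP => [/eqP h4|h4]; congr v; apply: val_inj; rewrite /= inordK //.
have := ltn_ord i; move: hi h4; case: (nat_of_ord i) => [|[|[|[|[|[|[|]]]]]]] //.
Qed.

Lemma emb_line u1 x1 y1 u2 x2 y2 s :
  (fun i => emb u1 x1 y1 i + emb u2 x2 y2 i * s) =1
  emb (fun i => u1 i + u2 i * s) (x1 + x2 * s) (y1 + y2 * s).
Proof. by move=> i; rewrite /emb; case: ifP => _ //; case: ifP. Qed.

Lemma emb_lincomb A u1 x1 y1 B u2 x2 y2 :
  lincomb A (emb u1 x1 y1) B (emb u2 x2 y2) =1
  emb (lincomb A u1 B u2) (A * x1 + B * x2) (A * y1 + B * y2).
Proof. by move=> i; rewrite /lincomb /emb; case: ifP => _ //; case: ifP. Qed.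

Lemma Yeq_emb u x4 x5 : (Yeq F t).@[emb u x4 x5] =
  x4 ^+ 3 - F.@[u] + x5 * (u (inord 0) * u (inord 3) - u (inord 1) * u (inord 2))
  + t * (u (inord 0) * x5 ^+ 2).
Proof.
have Fu : F.@[fun i => (tnth [tuple (X6 K 0); X6 K 1; X6 K 2; X6 K 3] i).@[emb u x4 x5]] = F.@[u].
  apply: meval_eq => -[[|[|[|[|//]]]] hi] /=; rewrite /X6 mevalXU emb_lt //;
  congr u; apply: val_inj; rewrite /= inordK //.
rewrite /Yeq /F6 !exprS !expr0 !mulr1.
rewrite !(mevalD, mevalB, mevalN, mevalM, mevalC) comp_mpoly_meval Fu /X6 !mevalXU emb4 emb5 !emb_lt //.
Qed.

Lemma e4c i l : (i < 4)%N -> (l < 4)%N -> e4 K l (inord i) = (i == l)%:R.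
Proof.
move=> hi hl; rewrite /e4 /evec.
have -> : (inord i == inord l :> 'I_4) = (i == l) => //.
apply/eqP/eqP => [h|->] //; by move/(congr1 val): h; rewrite /= !inordK.
Qed.

Section JK.
Variables (j k : nat).
Hypothesis hjk : (j = 1 /\ k = 2)%N \/ (j = 2 /\ k = 1)%N.
Variables (a b c d : K).
Definition q0 := lincomb a (e4 K k) b (e4 K 3).
Definition r0 := lincomb c (e4 K k) d (e4 K 3).

Lemma ext4 (u v : 'I_4 -> K) : u (inord 0) = v (inord 0) -> u (inord j) = v (inord j) ->
  u (inord k) = v (inord k) -> u (inord 3) = v (inord 3) -> u =1 v.
Proof.
move=> h0 hj hk h3 i.
have [m hm ->] : exists2 m, (m < 4)%N & i = inord m.
  by exists (val i); [exact: ltn_ord | rewrite inord_val].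
case: hjk => [[ej ek]|[ej ek]]; rewrite ej ek in hj hk; move: hm.
all: case: m => [|[|[|[|m]]]] //.
Qed.

Lemma slc l m : let u := lincomb l q0 m r0 in
  [/\ u (inord 0) = 0, u (inord j) = 0, u (inord k) = l * a + m * c & u (inord 3) = l * b + m * d].
Proof.
rewrite /lincomb /q0 /r0 /lincomb.
by case: hjk => [[-> ->]|[-> ->]]; do 8 (rewrite e4c //); split => /=; ring.
Qed.

Lemma Qjk (u : 'I_4 -> K) : u (inord 1) * u (inord 2) = u (inord j) * u (inord k).
Proof. by case: hjk => [[-> ->]|[-> ->]] //; rewrite mulrC. Qed.

Lemma ejc :
  [/\ e4 K j (inord 0) = 0, e4 K j (inord j) = 1, e4 K j (inord k) = 0 & e4 K j (inord 3) = 0].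
Proof. by case: hjk => [[-> ->]|[-> ->]]; do 4 (rewrite e4c //). Qed.

Lemma emb_ext u u' x y : u =1 u' -> emb u x y =1 emb u' x y.
Proof. by move=> e i; rewrite /emb; case: ifP. Qed.

Lemma lin_line l1 m1 l2 m2 s :
  (fun i => lincomb l1 q0 m1 r0 i + lincomb l2 q0 m2 r0 i * s) =1
  lincomb (l1 + l2 * s) q0 (m1 + m2 * s) r0.
Proof. by move=> i; rewrite /lincomb; ring. Qed.

Lemma jk4 : (j < 4)%N /\ (k < 4)%N.
Proof. by case: hjk => [[-> ->]|[-> ->]]. Qed.

Lemma ekc :
  [/\ e4 K k (inord 0) = 0, e4 K k (inord j) = 0, e4 K k (inord k) = 1 & e4 K k (inord 3) = 0].
Proof. by case: hjk => [[-> ->]|[-> ->]]; do 4 (rewrite e4c //). Qed.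

Lemma e3c :
  [/\ e4 K 3 (inord 0) = 0, e4 K 3 (inord j) = 0, e4 K 3 (inord k) = 0 & e4 K 3 (inord 3) = 1].
Proof. by case: hjk => [[-> ->]|[-> ->]]; do 4 (rewrite e4c //). Qed.

Lemma q0c : [/\ q0 (inord 0) = 0, q0 (inord j) = 0, q0 (inord k) = a & q0 (inord 3) = b].
Proof.
rewrite /q0 /lincomb.
by case: hjk => [[-> ->]|[-> ->]]; do 8 (rewrite e4c //); split => /=; ring.
Qed.

Lemma YeqJK u x4 x5 : (Yeq F t).@[emb u x4 x5] =
  x4 ^+ 3 - F.@[u] + x5 * (u (inord 0) * u (inord 3) - u (inord j) * u (inord k))
  + t * (u (inord 0) * x5 ^+ 2).
Proof. by rewrite Yeq_emb Qjk. Qed.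

Lemma main_jk (F3 : F \is 3.-homog) (hF3 : F.@[e4 K 3] != 0) (hdet : a * d - b * c != 0)
  (hh : restrict_to_line F q0 r0 != 0) (hmup : mup 0 (restrict_to_line F q0 r0) = 2%N)
  (p : 'I_6 -> K) (hp0 : p (inord 0) = 0) (hpj : p (inord j) = 0)
  (hE : eckardt_point (Yeq F t) p) : False.
Proof.
have [j4 k4] := jk4.
set h := restrict_to_line F q0 r0.
have [h0 h1 hal] : [/\ h`_0 = 0, h`_1 = 0 & h`_2 != 0].
  have d2 : 'X ^+ 2 %| h by have := mup_geq 0 2 hh; rewrite hmup leqnn polyC0 subr0 => /esym.
  have hg := divpK d2; set g := h %/ 'X ^+ 2 in hg.
  rewrite -hg !coefMXn /=; split => //; apply/negP => /eqP g0.
  have : ('X - 0%:P) %| g by rewrite dvdp_XsubCl /root horner_coef0 g0.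
  rewrite polyC0 subr0 => d1.
  have := mup_leq 0 2 hh; rewrite hmup leqnn polyC0 subr0 exprS => /esym/negP; apply.
  by rewrite -/h -hg; apply: dvdp_mul.
set al := h`_2; set bt := h`_3.
have Fsl l m : F.@[lincomb l q0 m r0] = al * l * m ^+ 2 + bt * m ^+ 3.
  by rewrite (@be K hK 4 F q0 r0 F3) -/h h0 h1 /al /bt; ring.
have Ysl l m nu rho : (Yeq F t).@[emb (lincomb l q0 m r0) nu rho] =
    nu ^+ 3 - (al * l * m ^+ 2 + bt * m ^+ 3).
  have [s0 sj sk s3] := slc l m.
  by rewrite Yeq_emb Fsl Qjk s0 sj; ring.
have Lsl (p1 x : 'I_6 -> K) lp mp np rp lx mx nx rx :
    p1 =1 emb (lincomb lp q0 mp r0) np rp -> x =1 emb (lincomb lx q0 mx r0) nx rx ->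
    Dlin K 6 (Yeq F t) p1 x = 3 * np ^+ 2 * nx - (al * (lx * mp ^+ 2 + 2 * lp * mp * mx) + 3 * bt * mp ^+ 2 * mx).
  move=> ep ex; rewrite -(@taylor K hK).
  have -> : restrict_to_line (Yeq F t) p1 x = cubP K
     (np ^+ 3 - (al * lp * mp ^+ 2 + bt * mp ^+ 3))
     (3 * np ^+ 2 * nx - (al * (lx * mp ^+ 2 + 2 * lp * mp * mx) + 3 * bt * mp ^+ 2 * mx))
     (3 * np * nx ^+ 2 - (al * (2 * lx * mp * mx + lp * mx ^+ 2) + 3 * bt * mp * mx ^+ 2))
     (nx ^+ 3 - (al * lx * mx ^+ 2 + bt * mx ^+ 3)).
    apply: (@cubic_ext K hK) => n0; move: (n0.+1%:R) => s.
    rewrite rtl_horner.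
    have -> : (Yeq F t).@[fun i => p1 i + x i * s] =
        (Yeq F t).@[emb (lincomb (lp + lx * s) q0 (mp + mx * s) r0) (np + nx * s) (rp + rx * s)].
      by apply: meval_eq => i; rewrite ep ex (emb_line _ _ _ _ _ _ s i); exact: (emb_ext _ _ _ _ (lin_line _ _ _ _ s) i).
    by rewrite Ysl; ring.
  by rewrite cubP_coef1.
set De := a * d - b * c.
set lp := (d * p (inord k) - c * p (inord 3)) / De.
set mp := (a * p (inord 3) - b * p (inord k)) / De.
set np := p (inord 4); set rp := p (inord 5).
have ep : p =1 emb (lincomb lp q0 mp r0) np rp.
  move=> i; rewrite (emb_eta p i); apply: emb_ext; apply: ext4;
  rewrite inordK //; have [s0 sj sk s3] := slc lp mp.
  - by rewrite s0 hp0.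
  - by rewrite sj hpj.
  - by rewrite sk /lp /mp /De; field.
  - by rewrite s3 /lp /mp /De; field.
case: hE => hnz hY hcone.
have R0 : np ^+ 3 = al * lp * mp ^+ 2 + bt * mp ^+ 3.
  by move: hY; rewrite (meval_eq _ ep) Ysl => /eqP; rewrite subr_eq0 => /eqP.
have cone (x : 'I_6 -> K) : (Yeq F t).@[x] = 0 -> Dlin K 6 (Yeq F t) p x = 0 ->
    (Yeq F t).@[lincomb 1 p 1 x] = 0.
  by move=> hx hl; have [] := hcone x (conj hx hl) 1 1.
have Ycomb (x : 'I_6 -> K) lx mx nx rx : x =1 emb (lincomb lx q0 mx r0) nx rx ->
    (Yeq F t).@[lincomb 1 p 1 x] = (np + nx) ^+ 3 - (al * (lp + lx) * (mp + mx) ^+ 2 + bt * (mp + mx) ^+ 3).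
  move=> ex; rewrite -(Ysl _ _ _ (rp + rx)); apply: meval_eq => i.
  rewrite /lincomb ep ex /emb /lincomb; case: ifP => _; first ring.
  by case: ifP => _; ring.
have cube (z : K) : exists nu : K, nu ^+ 3 = z.
  have [y hy] := @solve_monicpoly K 3 (fun i => if i == 0%N then z else 0) isT.
  by exists y; rewrite hy !big_ord_recr big_ord0 /=; ring.
have [mp0|mpn] := eqVneq mp 0.
  have np0 : np = 0.
    have : np ^+ 3 == 0 by rewrite R0 mp0; apply/eqP; ring.
    by rewrite expf_eq0 /= => /eqP.
  have [lp0|lpn] := eqVneq lp 0.
    have rpn : rp != 0.
      apply/negP => /eqP rp0; case: hnz => i; rewrite ep /emb /lincomb lp0 mp0 np0 rp0.
      by case: ifP => _; [rewrite !mul0r addr0 eqxx | case: ifP => _; rewrite eqxx].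
    pose w := lincomb 1 (e4 K j) 1 (e4 K k).
    have [ej0 ejj ejk ej3] := ejc; have [ek0 ekj ekk ek3] := ekc.
    have w0 : w (inord 0) = 0 by rewrite /w /lincomb ej0 ek0; ring.
    have wj : w (inord j) = 1 by rewrite /w /lincomb ejj ekj; ring.
    have wk : w (inord k) = 1 by rewrite /w /lincomb ejk ekk; ring.
    have w3 : w (inord 3) = 0 by rewrite /w /lincomb ej3 ek3; ring.
    pose x := emb w 0 (- F.@[w]).
    have e1 : (Yeq F t).@[x] = 0 by rewrite /x YeqJK w0 wj wk w3; ring.
    have e2 : Dlin K 6 (Yeq F t) p x = 0.
      rewrite -(@taylor K hK).
      have -> : restrict_to_line (Yeq F t) p x = cubP K 0 0 (- rp) 0.
        apply: (@cubic_ext K hK) => n0; move: (n0.+1%:R) => s.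
        rewrite rtl_horner.
        have -> : (Yeq F t).@[fun i => p i + x i * s] =
            (Yeq F t).@[emb (fun i => s * w i) 0 (rp - F.@[w] * s)].
          apply: meval_eq => i; rewrite ep /x /emb /lincomb lp0 mp0 np0.
          by case: ifP => _; first ring; case: ifP => _; ring.
        rewrite YeqJK (@meval_homog K 4 3 F s w F3) /= w0 wj wk w3; ring.
      by rewrite cubP_coef1.
    have := cone x e1 e2.
    have -> : (Yeq F t).@[lincomb 1 p 1 x] = (Yeq F t).@[emb w 0 (rp - F.@[w])].
      apply: meval_eq => i; rewrite /lincomb ep /x /emb /lincomb lp0 mp0 np0.
      by case: ifP => _; first ring; case: ifP => _; ring.
    rewrite YeqJK w0 wj wk w3 => H.
    have : rp = 0 by rewrite -[RHS]oppr0 -H; ring.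
    by move/eqP; rewrite (negbTE rpn).
  have [nu hnu] := cube bt.
  pose x := emb (lincomb 0 q0 1 r0) nu 0.
  have e1 : (Yeq F t).@[x] = 0 by rewrite /x Ysl hnu; ring.
  have e2 : Dlin K 6 (Yeq F t) p x = 0.
    by rewrite (Lsl p x lp mp np rp 0 1 nu 0 ep (frefl _)) mp0 np0; ring.
  have := cone x e1 e2; rewrite (Ycomb x 0 1 nu 0 (frefl _)) mp0 np0 => H.
  have : al * lp = 0 by rewrite -[RHS]oppr0 -H -hnu; ring.
  by move/eqP; rewrite mulf_eq0 (negbTE hal) (negbTE lpn).
have [np0|npn] := eqVneq np 0.
  have rel : al * lp + bt * mp = 0.
    have : mp ^+ 2 * (al * lp + bt * mp) = 0.
      transitivity (al * lp * mp ^+ 2 + bt * mp ^+ 3); first ring.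
      by rewrite -R0 np0; ring.
    by move/eqP; rewrite mulf_eq0 expf_eq0 /= (negbTE mpn) => /eqP.
  pose pk := lp * a + mp * c.
  have [s0 sj sk s3] := slc lp mp.
  pose pp := lincomb lp q0 mp r0.
  have pp0 : pp (inord 0) = 0 by exact: s0.
  have ppj : pp (inord j) = 0 by exact: sj.
  have ppk : pp (inord k) = pk by exact: sk.
  have pkn : pk != 0.
    apply/negP => /eqP pk0.
    have k1 : mp * (bt * a - al * c) = 0.
      transitivity (a * (al * lp + bt * mp) - al * pk); first by rewrite /pk; ring.
      by rewrite rel pk0; ring.
    move/eqP: k1; rewrite mulf_eq0 (negbTE mpn) /= => /eqP k2.
    have e3l : e4 K 3 =1 lincomb (- c / De) q0 (a / De) r0.
      have [e0 ej ek e3] := e3c; have [t0 tj tk t3] := slc (- c / De) (a / De).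
      apply: ext4.
      - by rewrite e0 t0.
      - by rewrite ej tj.
      - by rewrite ek tk /De; field.
      - by rewrite e3 t3 /De; field.
    move: hF3; rewrite (meval_eq _ e3l) Fsl.
    have -> : al * (- c / De) * (a / De) ^+ 2 + bt * (a / De) ^+ 3 =
      a ^+ 2 / De ^+ 3 * (bt * a - al * c) by rewrite /De; field.
    by rewrite k2 mulr0 eqxx.
  have Dq : Dlin K 4 F pp q0 = al * mp ^+ 2.
    rewrite -(@taylor K hK).
    have -> : restrict_to_line F pp q0 = cubP K (al * lp * mp ^+ 2 + bt * mp ^+ 3) (al * mp ^+ 2) 0 0.
      apply: (@cubic_ext K hK) => n0; move: (n0.+1%:R) => s.
      have e : (fun i => pp i + q0 i * s) =1 lincomb (lp + s) q0 mp r0.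
        by move=> i; rewrite /pp /lincomb; ring.
      by rewrite rtl_horner (meval_eq _ e) Fsl; ring.
    by rewrite cubP_coef1.
  pose Dj := Dlin K 4 F pp (e4 K j).
  pose ka := - (Dj + rp * pk) / (al * mp ^+ 2).
  pose w := lincomb 1 (e4 K j) ka q0.
  have [ej0 ejj ejk ej3] := ejc; have [q00 q0j q0k q03] := q0c.
  have w0 : w (inord 0) = 0 by rewrite /w /lincomb ej0 q00; ring.
  have wj : w (inord j) = 1 by rewrite /w /lincomb ejj q0j; ring.
  have wk : w (inord k) = ka * a by rewrite /w /lincomb ejk q0k; ring.
  have w3 : w (inord 3) = ka * b by rewrite /w /lincomb ej3 q03; ring.
  have Dw : Dlin K 4 F pp w = Dj + ka * Dlin K 4 F pp q0.
    rewrite /Dj /Dlin mulr_sumr -big_split /=; apply: eq_bigr => i _; rewrite /w /lincomb; ring.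
  pose x5 := (F.@[w] - F.@[fun i => pp i + w i] - rp * (pk + ka * a) - 1) / pk.
  have [x4 hx4] := cube (F.@[w] + x5 * (ka * a)).
  pose x := emb w x4 x5.
  have e1 : (Yeq F t).@[x] = 0 by rewrite /x YeqJK w0 wj wk w3 hx4; ring.
  have e2 : Dlin K 6 (Yeq F t) p x = 0.
    rewrite -(@taylor K hK).
    set R := restrict_to_line F pp w.
    have sR : (size R <= 4)%N := @size_rtl K 4 3 F pp w F3.
    have -> : restrict_to_line (Yeq F t) p x = cubP K (- R`_0) (- R`_1 - rp * pk)
        (- R`_2 - (rp * (ka * a) + x5 * pk)) (x4 ^+ 3 - R`_3 - x5 * (ka * a)).
      apply: (@cubic_ext K hK) => n0; move: (n0.+1%:R) => s.
      rewrite rtl_horner.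
      have -> : (Yeq F t).@[fun i => p i + x i * s] =
          (Yeq F t).@[emb (fun i => pp i + w i * s) (x4 * s) (rp + x5 * s)].
        apply: meval_eq => i; rewrite ep /x /emb np0.
        by case: ifP => _; [by [] | case: ifP => _; ring].
      rewrite YeqJK /= -rtl_horner -/R (horner_coef_wide _ sR) !big_ord_recr big_ord0 /=.
      rewrite pp0 ppj ppk w0 wj wk w3; ring.
    by rewrite cubP_coef1 /R (@taylor K hK) Dw Dq /ka; field; rewrite mpn hal.
  have := cone x e1 e2.
  have -> : (Yeq F t).@[lincomb 1 p 1 x] = (Yeq F t).@[emb (fun i => pp i + w i) x4 (rp + x5)].
    apply: meval_eq => i; rewrite /lincomb ep /x /emb np0.
    by case: ifP => _; [rewrite /pp; ring | case: ifP => _; ring].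
  rewrite YeqJK /= pp0 ppj ppk w0 wj wk w3 hx4 => H.
  have : (1 : K) = 0 by rewrite -H /x5; field.
  by move/eqP; rewrite oner_eq0.
have n3 : (3 : K) != 0 by rewrite ((pcharf0P K).1 hK).
pose ka := al * mp ^+ 2 / (3 * np ^+ 2).
have kan : ka != 0.
  apply: mulf_neq0; first by apply: mulf_neq0 => //; exact: expf_neq0.
  by rewrite invr_eq0; apply: mulf_neq0 => //; exact: expf_neq0.
pose A := - ka ^+ 3; pose B := 3 * np * ka ^+ 2.
have Bn : B != 0.
  by apply: mulf_neq0; [apply: mulf_neq0 | exact: expf_neq0].
have E1 : 3 * np ^+ 2 * ka - al * mp ^+ 2 = 0.
  by rewrite /ka; field; rewrite npn n3.
have E0 : np ^+ 3 - (al * lp * mp ^+ 2 + bt * mp ^+ 3) = 0 by rewrite R0 subrr.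
pose x := emb (lincomb (A * lp + B) q0 (A * mp) r0) (A * np + B * ka) 0.
have e1 : (Yeq F t).@[x] = 0.
  rewrite /x Ysl.
  transitivity (A ^+ 3 * (np ^+ 3 - (al * lp * mp ^+ 2 + bt * mp ^+ 3))
     + A ^+ 2 * B * (3 * np ^+ 2 * ka - al * mp ^+ 2)
     + A * B ^+ 2 * (3 * np * ka ^+ 2) + B ^+ 3 * ka ^+ 3); first ring.
  by rewrite E0 E1 /A /B; ring.
have e2 : Dlin K 6 (Yeq F t) p x = 0.
  rewrite (Lsl p x lp mp np rp (A * lp + B) (A * mp) (A * np + B * ka) 0 ep (frefl _)).
  transitivity (3 * A * (np ^+ 3 - (al * lp * mp ^+ 2 + bt * mp ^+ 3))
     + B * (3 * np ^+ 2 * ka - al * mp ^+ 2)); first ring.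
  by rewrite E0 E1; ring.
have H' : (Yeq F t).@[lincomb 1 p 1 x] = B ^+ 3.
  rewrite (Ycomb x (A * lp + B) (A * mp) (A * np + B * ka) 0 (frefl _)).
  transitivity ((1 + A) ^+ 3 * (np ^+ 3 - (al * lp * mp ^+ 2 + bt * mp ^+ 3))
     + (1 + A) ^+ 2 * B * (3 * np ^+ 2 * ka - al * mp ^+ 2)
     + (1 + A) * B ^+ 2 * (3 * np * ka ^+ 2) + B ^+ 3 * ka ^+ 3); first ring.
  by rewrite E0 E1 /A /B; ring.
have := cone x e1 e2; rewrite H' => /eqP; rewrite expf_eq0 /= (negbTE Bn).
done.
Qed.

End JK.
End Main.

Theorem lemma5p9 (K : closedFieldType) (hK : [pchar K] =i pred0)
    (F : {mpoly K[4]}) (t : K) :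
  in_U0 F -> t != 0 ->
  smooth_hypersurface (Yeq F t) -> ~ contains_plane (Yeq F t) ->
  forall p : 'I_6 -> K, coneC F 1 p \/ coneC F 2 p ->
  ~ eckardt_point (Yeq F t) p.
Proof.
move=> [F3 _ hF3 tm2 tm1] _ _ _ p hp hE.
have cc i : (i < 5)%N -> coneC F i p -> p (inord 0) = 0 /\ p (inord i) = 0.
  move=> hi [_ [A [B [c [[_ c0 ci _ _] ->]]]]]; rewrite /lincomb /e6 /evec c0 ci.
  have n0 : (inord 0 == inord 5 :> 'I_6) = false by rewrite -val_eqE /= !inordK.
  have ni : (inord i == inord 5 :> 'I_6) = false.
    by rewrite -val_eqE /= !inordK // ?(ltn_trans hi) // ltn_eqF.
  by rewrite n0 ni !mulr0 addr0.
case: hp => hp.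
  have [hp0 hpj] := cc 1%N isT hp.
  case: tm2 => a [b [c [d [hdet [hh hmup]]]]].
  exact: (@main_jk K hK F t 1 2 (or_introl (conj erefl erefl)) a b c d F3 hF3 hdet hh hmup p hp0 hpj hE).
have [hp0 hpj] := cc 2%N isT hp.
case: tm1 => a [b [c [d [hdet [hh hmup]]]]].
exact: (@main_jk K hK F t 2 1 (or_intror (conj erefl erefl)) a b c d F3 hF3 hdet hh hmup p hp0 hpj hE).
Qed.
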